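(* Let $r\in\mathbb{Z}$, let $P(r)$ be the lower-triangular matrix with $(n,k)$ entry $[x^n]\,\frac{1+rx^2}{1+x^2}\left(\frac{x}{1+x^2}\right)^k$, let $M(r)=P(r)^{-1}$, and let $s_n=s_n(r)=\sum_{k=0}^n M(r)_{n,k}$ be the row sums of $M(r)$. Then for all $n\ge 0$, $$s_n=\sum_{k=0}^{\lfloor \frac{n}{2} \rfloor} \binom{n}{\lfloor \frac{n-2k}{2} \rfloor}(-1)^k r^k.$$
   Context: $[x^n]h(x)$ denotes the coefficient of $x^n$ in $h(x)$. $P(r)$ is the coefficient array of the restricted Chebyshev–Boubaker polynomials and $M(r)$ is its moment matrix, the Riordan array $\left(\frac{\sqrt{1-4x^2}(r-1)+r+1}{2(r+x^2(r-1)^2)}, \frac{1-\sqrt{1-4x^2}}{2x}\right)$. *)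

(* Defs.v *)
From mathcomp Require Import all_boot all_order all_algebra.
Set Implicit Arguments. Unset Strict Implicit. Unset Printing Implicit Defensive.
Import GRing.Theory Num.Theory.
Local Open Scope ring_scope.

(* Truncated inverse of a polynomial p with p(0) = 1, modulo x^(n+1):
   1/p = \sum_j (1 - p)^j, and only j <= n contribute to [x^m], m <= n. *)
Definition inv_trunc (p : {poly int}) (n : nat) : {poly int} :=
  \sum_(j < n.+1) (1 - p) ^+ j.

(* [x^n] of the formal power series  num / den  (den(0) = 1). *)
Definition coef_ratio (num den : {poly int}) (n : nat) : int :=
  (num * inv_trunc den n)`_n.

(* P(r)_{n,k} = [x^n] (1 + r x^2)/(1 + x^2) * (x/(1+x^2))^k
              = [x^n] ((1 + r x^2) x^k) / (1 + x^2)^(k+1). *)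
Definition Pentry (r : int) (n k : nat) : int :=
  coef_ratio ((1 + r *: 'X^2) * 'X^k) ((1 + 'X^2) ^+ k.+1) n.

Definition Pmat (r : int) (N : nat) : 'M[int]_N :=
  \matrix_(i < N, j < N) Pentry r i j.

(* Since P(r) is lower unitriangular, the leading
   (n+1) x (n+1) block of P(r)^{-1} is the inverse of the leading
   (n+1) x (n+1) block of P(r); so M(r)_{n,k} (k <= n) is read off there. *)
Definition Mentry (r : int) (n : nat) (k : 'I_n.+1) : int :=
  (invmx (Pmat r n.+1)) (ord_max : 'I_n.+1) k.

Arguments Mentry r n k : clear implicits.

Definition srow (r : int) (n : nat) : int :=
  \sum_(k < n.+1) Mentry r n k.

(* Main.v *)
Require Import Defs.
From mathcomp Require Import all_boot all_order all_algebra ring zify.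
Import GRing.Theory Num.Theory.
Local Open Scope ring_scope.
Set Implicit Arguments. Unset Strict Implicit.

Definition eqN (N : nat) (p q : {poly int}) := forall m, (m <= N)%N -> p`_m = q`_m.

Lemma eqN_sym N p q : eqN N p q -> eqN N q p.
Proof. by move=> H m hm; rewrite H. Qed.
Lemma eqN_trans N p q s : eqN N p q -> eqN N q s -> eqN N p s.
Proof. by move=> H1 H2 m hm; rewrite H1 ?H2. Qed.
Lemma eqN_mull N s p q : eqN N p q -> eqN N (s * p) (s * q).
Proof.
move=> H m hm; rewrite !coefM; apply: eq_bigr => j _; rewrite H //.
exact: leq_trans (leq_subr _ _) hm.
Qed.
Lemma eqN_le N M p q : (M <= N)%N -> eqN N p q -> eqN M p q.
Proof. by move=> hMN H m hm; apply: H; exact: leq_trans hm hMN. Qed.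

Lemma inv_trunc_eq (p : {poly int}) N : p * inv_trunc p N = 1 - (1 - p) ^+ N.+1.
Proof.
have := subrXX 1 (1 - p) N.+1; rewrite expr1n => ->; rewrite /inv_trunc.
have -> : 1 - (1 - p) = p by rewrite opprB addrC addrNK.
congr (_ * _).
by apply: eq_bigr => i _; rewrite expr1n mul1r.
Qed.

Lemma inv_trunc_spec (p : {poly int}) N : p`_0 = 1 -> eqN N (p * inv_trunc p N) 1.
Proof.
move=> p0; rewrite inv_trunc_eq.
have : root (1 - p) 0 by rewrite /root horner_coef0 coefB coef1 p0 subrr.
move/factor_theorem=> [q hq]; rewrite hq subr0 exprMn.
move=> m hm; rewrite coefB coefMXn ltnS hm subr0 //.
Qed.

Lemma cancelN N (d A B I : {poly int}) :
  eqN N (d * I) 1 -> eqN N (d * A) (d * B) -> eqN N A B.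
Proof.
move=> hI hAB.
have e1 : eqN N A (I * (d * A)).
  have := eqN_mull A hI; rewrite mulr1 => h.
  have -> : I * (d * A) = A * (d * I) by ring.
  exact: eqN_sym.
have e2 : eqN N (I * (d * B)) B.
  have := eqN_mull B hI; rewrite mulr1 => h.
  by have -> : I * (d * B) = B * (d * I) by ring.
apply: eqN_trans e1 _; apply: eqN_trans _ e2; exact: eqN_mull.
Qed.

Definition Qp : {poly int} := 1 + 'X^2.
Definition Gp (r : int) : {poly int} := 1 + r *: 'X^2.
Definition Ck (r : int) (k N : nat) : {poly int} :=
  (Gp r * 'X^k) * inv_trunc (Qp ^+ k.+1) N.

Lemma Qp0 k : (Qp ^+ k)`_0 = 1.
Proof.
elim: k => [|k IH]; first by rewrite expr0 coef1.
by rewrite exprS coefM big_ord_recl big_ord0 addr0 IH /Qp coefD coef1 coefXn mulr1 addr0.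
Qed.

Lemma invQ k N : eqN N (Qp ^+ k * inv_trunc (Qp ^+ k) N) 1.
Proof. exact/inv_trunc_spec/Qp0. Qed.

Lemma Pentry_Ck r m k N : (m <= N)%N -> Pentry r m k = (Ck r k N)`_m.
Proof.
move=> hm; rewrite /Pentry /coef_ratio /Ck.
suff h : eqN m (inv_trunc (Qp ^+ k.+1) m) (inv_trunc (Qp ^+ k.+1) N).
  by rewrite (eqN_mull _ h).
apply: (cancelN (d := Qp ^+ k.+1) (I := inv_trunc (Qp ^+ k.+1) m)); first exact: invQ.
have h1 := invQ (k.+1) (N:=m). have h2 := eqN_le hm (invQ k.+1 (N:=N)).
move=> i hi; rewrite h1 // h2 //.
Qed.

Lemma Ck_rel r k N : eqN N (Qp * Ck r k.+1 N) ('X * Ck r k N).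
Proof.
apply: (cancelN (d := Qp ^+ k.+1) (I := inv_trunc (Qp ^+ k.+1) N)); first exact: invQ.
have e1 : Qp ^+ k.+1 * (Qp * Ck r k.+1 N) =
   (Gp r * 'X^(k.+1)) * (Qp ^+ k.+2 * inv_trunc (Qp ^+ k.+2) N).
  by rewrite /Ck (exprS Qp k.+1); ring.
have e2 : Qp ^+ k.+1 * ('X * Ck r k N) =
   (Gp r * 'X^(k.+1)) * (Qp ^+ k.+1 * inv_trunc (Qp ^+ k.+1) N).
  by rewrite /Ck (exprS 'X k); ring.
rewrite e1 e2 => m hm.
by rewrite (eqN_mull _ (invQ k.+2 (N:=N))) // (eqN_mull _ (invQ k.+1 (N:=N))).
Qed.

Lemma Ck0_rel r N : eqN N (Qp * Ck r 0 N) (Gp r).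
Proof.
have -> : Qp * Ck r 0 N = Gp r * (Qp ^+ 1 * inv_trunc (Qp ^+ 1) N).
  by rewrite /Ck expr1 expr0 mulr1 mulrCA.
move=> m hm; rewrite (eqN_mull _ (invQ 1 (N:=N))) // mulr1 //.
Qed.

Definition Pm r (j k : nat) : int := if j is j'.+1 then Pentry r j' k else 0.

Lemma QpC (C : {poly int}) i : (Qp * C)`_i = C`_i + (if (i < 2)%N then 0 else C`_(i - 2)).
Proof. by rewrite /Qp mulrDl mul1r coefD coefXnM. Qed.

Lemma P_rel r m k : Pentry r m.+1 k.+1 + Pm r m k.+1 = Pentry r m k.
Proof.
rewrite (Pentry_Ck _ _ (N := m.+1)) // (Pentry_Ck r k (m:=m) (N := m.+1)) ?leqnSn //.
have := Ck_rel r k (N := m.+1) (leqnn _).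
rewrite QpC coefXM /=; case: m => [|m] //=.
by rewrite subn2 /= (Pentry_Ck r k.+1 (m:=m) (N := m.+2)) ?leqW.
Qed.

Lemma P0 r k : Pentry r 0 k.+1 = 0.
Proof.
rewrite (Pentry_Ck _ _ (N := 0)) // /Ck -mulrA mulrCA coefXnM //.
Qed.

Lemma Gp_coef r i : (Gp r)`_i = (i == 0)%:R + r * (i == 2)%:R.
Proof. by rewrite /Gp coefD coef1 coefZ coefXn. Qed.

Lemma P00 r : Pentry r 0 0 = 1.
Proof.
rewrite (Pentry_Ck _ _ (N := 0)) //.
have := Ck0_rel r (N := 0) (leqnn _); rewrite QpC /= Gp_coef /= addr0 => ->.
by rewrite mulr0 addr0.
Qed.

Lemma P_rel0 r m : Pentry r m.+1 0 + Pm r m 0 = r * (m == 1)%:R.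
Proof.
rewrite (Pentry_Ck _ _ (N := m.+1)) //.
have := Ck0_rel r (N := m.+1) (leqnn _).
rewrite QpC Gp_coef; case: m => [|m] /=.
  by rewrite !addr0 mulr0.
rewrite subn2 /= (Pentry_Ck r 0 (m:=m) (N := m.+2)) ?leqW // => ->.
by case: m => [|[|m]] /=; rewrite ?add0r ?addr0 ?mulr1 ?mulr0.
Qed.

Fixpoint D (n m : nat) : nat :=
  match n with
  | 0 => (m == 0%N)
  | n'.+1 => match m with 0 => D n' 1 | m'.+1 => (D n' m' + D n' m'.+2)%N end
  end.

Lemma D_zero n m : (n < m)%N -> D n m = 0%N.
Proof.
elim: n m => [|n IH] [|m] //.
by move=> h /=; rewrite (IH m) ?(IH m.+2) //; lia.
Qed.

Lemma sum_pad (R : nmodType) (f : nat -> R) B K : (B <= K)%N ->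
  (forall j, (B <= j)%N -> f j = 0) -> \sum_(j < K) f j = \sum_(j < B) f j.
Proof.
move=> hBK hf; have [d ->] : exists d, K = (B + d)%N by exists (K - B)%N; rewrite subnKC.
elim: d => [|d IH]; first by rewrite addn0.
by rewrite addnS big_ord_recr /= IH hf ?addr0 // leq_addr.
Qed.

Ltac recl := rewrite big_ord_recl; under eq_bigr => ? _ do rewrite lift0.

Definition Mf (r : int) (n k : nat) : int :=
  \sum_(j < n.+1) (-r) ^+ j * (D n (k + j.*2))%:R.

Lemma Mf_pad r n k K : (n < K)%N ->
  Mf r n k = \sum_(j < K) (-r) ^+ j * (D n (k + j.*2))%:R.
Proof.
move=> hK; rewrite /Mf (sum_pad (f := fun j => (-r) ^+ j * (D n (k + j.*2))%:R) (B := n.+1) (K := K)) // => j hj.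
by rewrite D_zero ?mulr0 //; lia.
Qed.

Lemma Mf_zero r n k : (n < k)%N -> Mf r n k = 0.
Proof.
move=> h; rewrite /Mf big1 // => j _; rewrite D_zero ?mulr0 //; lia.
Qed.

Lemma Mf0 r k : Mf r 0 k = (k == 0%N)%:R.
Proof. by rewrite /Mf big_ord_recl big_ord0 addr0 expr0 mul1r addn0. Qed.

Lemma MfS r n k : Mf r n.+1 k.+1 = Mf r n k + Mf r n k.+2.
Proof.
rewrite (Mf_pad r k (K := n.+2)) // (Mf_pad r k.+2 (K := n.+2)) // /Mf -big_split /=.
by apply: eq_bigr => j _; rewrite addSn /= natrD mulrDr.
Qed.

Lemma MfS0 r n : Mf r n.+1 0 = (1 - r) * Mf r n 1.
Proof.
set X := \sum_(j < n.+1) (-r) ^+ j * (D n (j.*2.+3))%:R.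
have hM : Mf r n 1 = (D n 1)%:R + (-r) * X.
  rewrite (Mf_pad r 1 (K := n.+2)) //; recl; rewrite expr0 mul1r addn0; congr (_ + _).
  rewrite /X mulr_sumr; apply: eq_bigr => j _; rewrite exprS mulrA.
  by rewrite doubleS add1n.
have hL : Mf r n.+1 0 = (D n 1)%:R + (-r) * Mf r n 1 + (-r) * X.
  rewrite /Mf; recl; rewrite expr0 mul1r add0n /= -addrA; congr (_ + _).
  rewrite /X !mulr_sumr -big_split /=.
  by apply: eq_bigr => j _; rewrite natrD exprS add1n; ring.
rewrite hL hM; ring.
Qed.

Definition Tn (n m : nat) : nat := \sum_(k < n.+1) D n (k + m).

Lemma TS n m : Tn n.+1 m.+1 = (Tn n m + Tn n m.+2)%N.
Proof.
rewrite /Tn.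
have -> : \sum_(k < n.+2) D n.+1 (k + m.+1) = \sum_(k < n.+2) (D n (k + m) + D n (k + m.+2))%N.
  by apply: eq_bigr => k _; rewrite addnS /= addnS addnS.
rewrite big_split /=; congr (_ + _)%N.
  by rewrite (sum_pad (f := fun k => D n (k + m)) (B := n.+1)) // => j hj; rewrite D_zero //; lia.
by rewrite (sum_pad (f := fun k => D n (k + m.+2)) (B := n.+1)) // => j hj; rewrite D_zero //; lia.
Qed.

Lemma T0 n : Tn n.+1 0 = (Tn n 0 + Tn n 1)%N.
Proof.
have h1 : Tn n.+1 1 = \sum_(k < n.+1) D n.+1 (k.+1 + 0).
  rewrite /Tn (sum_pad (f := fun k => D n.+1 (k + 1)) (B := n.+1)) //.
    by apply: eq_bigr => k _; rewrite addn0 addn1.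
  by move=> j hj; rewrite D_zero //; lia.
have h2 : Tn n 1 = (D n 1 + Tn n 2)%N.
  rewrite /Tn; recl; rewrite add0n; congr (_ + _)%N.
  rewrite (sum_pad (f := fun k => D n (k + 2)) (B := n) (K := n.+1)) //.
    by apply: eq_bigr => k _; rewrite addn1 addn2.
  by move=> j hj; rewrite D_zero //; lia.
rewrite {1}/Tn; recl; rewrite -h1 [Tn n.+1 1]TS h2 add0n /=; lia.
Qed.

Definition Phi (n m : nat) : nat := if (m <= n)%N then 'C(n, (n - m)./2) else 0%N.

Lemma PhiS n m : Phi n.+1 m.+1 = (Phi n m + Phi n m.+2)%N.
Proof.
rewrite /Phi ltnS subSS.
case: (leqP m n) => h; last first.
  have h2 : (m.+2 <= n)%N = false by lia.
  by rewrite h2.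
have [d ->] : exists d, n = (m + d)%N by exists (n - m)%N; rewrite subnKC.
rewrite addKn; case: d => [|[|d]].
- by rewrite (_ : (m.+1 < m + 0)%N = false) ?bin0 ?addn0 //; lia.
- by rewrite (_ : (m.+1 < m + 1)%N = false) ?bin0 ?addn0 //; lia.
rewrite (_ : (m.+1 < m + d.+2)%N = true); last by lia.
have -> : (m + d.+2 - m.+2 = d)%N by lia.
by rewrite /= binS addnC.
Qed.

Lemma PhiS0 n : Phi n.+1 0 = (Phi n 0 + Phi n 1)%N.
Proof.
rewrite /Phi !subn0 /=; case: n => [|n] //=.
rewrite subSS subn0.
have [a [->|->]] : exists a, n = a.*2 \/ n = a.*2.+1.
  exists n./2; have := odd_double_half n; case: (odd n) => /= hh; [right|left]; lia.
- rewrite ?doubleK ?uphalf_double binS; congr (_ + _)%N.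
  rewrite -(bin_sub (n := a.*2.+1) (m := a)); first by congr 'C(_, _); lia.
  lia.
- rewrite uphalfE.
  have -> : (a.*2.+1)./2 = a by lia.
  have -> : (a.*2.+2)./2 = a.+1 by lia.
  by rewrite binS.
Qed.

Lemma T_Phi n m : Tn n m = Phi n m.
Proof.
elim: n m => [|n IH] m.
  rewrite /Tn big_ord_recl big_ord0 addn0 /= /Phi; case: m => //.
by case: m => [|m]; rewrite ?T0 ?PhiS0 ?TS ?PhiS !IH.
Qed.

Lemma shift_sum r i k K : (i < K)%N ->
  \sum_(j < K) (Mf r i j + Mf r i j.+2) * Pentry r j.+1 k =
  \sum_(j < K.+2) Mf r i j * (Pentry r j.+1 k + Pm r j k) - Mf r i 1 * Pentry r 0 k.
Proof.
move=> hK.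
under eq_bigr => j _ do rewrite mulrDl.
under [in RHS]eq_bigr => j _ do rewrite mulrDr.
rewrite !big_split /=.
rewrite (sum_pad (f := fun j => Mf r i j * Pentry r j.+1 k) (B := K) (K := K.+2)); last first.
  by move=> j hj; rewrite Mf_zero ?mul0r //; lia.
  by lia.
have e : \sum_(j < K.+2) Mf r i j * Pm r j k =
    Mf r i 1 * Pentry r 0 k + \sum_(j < K) Mf r i j.+2 * Pentry r j.+1 k.
  by rewrite !big_ord_recl /= mulr0 add0r.
rewrite e; ring.
Qed.

Lemma E_id r i : forall k K, (i < K)%N ->
  \sum_(j < K) Mf r i j * Pentry r j k = (i == k)%:R.
Proof.
elim: i => [|i IH] k [|K] // hK.
  recl; rewrite Mf0 /= mul1r big1 ?addr0; last by move=> j _; rewrite Mf0 mul0r.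
  by case: k => [|k]; rewrite ?P00 ?P0.
recl.
under eq_bigr => j _ do rewrite MfS.
rewrite shift_sum //; case: k => [|k].
  rewrite MfS0 P00.
  under eq_bigr => j _ do rewrite P_rel0.
  do 2 recl; rewrite big1 /=; last by move=> j _; rewrite mulr0 mulr0.
  rewrite !mulr0 !mulr1; ring.
rewrite P0 !mulr0 subr0 add0r.
under eq_bigr => j _ do rewrite P_rel.
by rewrite IH //; lia.
Qed.

Definition Mmat r N : 'M[int]_N := \matrix_(i < N, j < N) Mf r i j.

Lemma MP r N : Mmat r N *m Pmat r N = 1%:M.
Proof.
apply/matrixP => i k; rewrite !mxE.
under eq_bigr => j _ do rewrite !mxE.
by rewrite E_id.
Qed.

Lemma invP r N : invmx (Pmat r N) = Mmat r N.
Proof.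
have [_ hU] := mulmx1_unit (MP r N).
by rewrite -[LHS]mul1mx -(MP r N) -mulmxA mulmxV // mulmx1.
Qed.

Theorem mainTheorem5 (r : int) (n : nat) :
  srow r n =
  \sum_(k < n./2.+1) ('C(n, ((n - k.*2)%N)./2))%:R * (-1) ^+ k * r ^+ k.
Proof.
rewrite /srow /Mentry invP.
under eq_bigr => k _ do rewrite mxE.
rewrite /Mf exchange_big /=.
under eq_bigr => j _ do rewrite -mulr_sumr -natr_sum.
under eq_bigr => j _ do rewrite -/(Tn n j.*2) T_Phi.
rewrite (sum_pad (f := fun j => (-r) ^+ j * (Phi n j.*2)%:R) (B := n./2.+1)); last 2 first.
- lia.
- by move=> j hj; rewrite /Phi ifN ?mulr0 //; lia.
apply: eq_bigr => j _; rewrite /Phi ifT; last by have := ltn_ord j; lia.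
by rewrite -[-r]mulN1r exprMn; ring.
Qed.
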